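(* Let $\mathcal I_1\subset\mathbb C[L^-\mathrm{GL}_K]$ be the ideal of the scheme-theoretic image $\mathcal M^1$ of $\pi_1$, and let $\mathcal I'_1$ be the ideal generated by the elements $T^{(m)}_{ab}T^{(n+k)}_{cd}-T^{(n)}_{ab}T^{(m+k)}_{cd}$ and $T^{(m)}_{a_1b_1}T^{(n)}_{a_2b_2}-T^{(m)}_{a_1b_2}T^{(n)}_{a_2b_1}$ for all $m,n,k\in\mathbb Z_{\ge0}$ and $a,b,c,d,a_1,a_2,b_1,b_2\in\{1,\dots,K\}$. If $\mathcal I'_1$ is a radical ideal, then $\mathcal I_1=\mathcal I'_1$.
   Context: $L^-\mathrm{GL}_K$ is the group scheme of power series $1+\sum_{i\ge1}g_iz^{-i}$, $g_i\in\mathfrak{gl}_K$, with $\mathbb C[L^-\mathrm{GL}_K]=\mathbb C[T^{(n)}_{ab}:n\ge0,1\le a,b\le K]$, $T^{(n)}_{ab}$ the $(a,b)$ entry of $g_{n+1}$. $\mathcal M(1,K)=\mathrm{Rep}(1,K)/\!/\mathrm{GL}_1$, where $\mathrm{Rep}(1,K)$ consists of $(B,\psi,\overline\psi)$, $B\in\mathbb C$, $\psi\in\mathrm{Mat}_{1\times K}$, $\overline\psi\in\mathrm{Mat}_{K\times1}$, $\lambda\cdot(B,\psi,\overline\psi)=(B,\lambda\psi,\lambda^{-1}\overline\psi)$. $\pi_1:\mathcal M(1,K)\to L^-\mathrm{GL}_K$ sends $(B,\psi,\overline\psi)$ to $1+\overline\psi(z-\widetilde B/2)^{-1}\psi$,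 $\widetilde B=B+\psi\overline\psi$; its image consists of series $1+g/(z-b)$ with $b\in\mathbb C$ and $\mathrm{rank}(g)\le1$. *)

(* Defs.v *)
From HB Require Import structures.
From mathcomp Require Import all_boot all_order all_algebra.
From mathcomp Require Import finmap.
From mathcomp Require Import monalg.
From mathcomp Require Import complex.
From mathcomp Require Import reals.

Set Implicit Arguments.
Unset Strict Implicit.
Unset Printing Implicit Defensive.

Import Order.TTheory GRing.Theory Num.Theory.
Local Open Scope ring_scope.

Definition Cplx (R : realType) := (complex R).

(* Index set of the coordinates T^{(n)}_{ab}, n >= 0, 1 <= a,b <= K
   (here a, b range over 'I_K = {0,...,K-1}). *)
Definition Tidx (K : nat) := (nat * 'I_K * 'I_K)%type.

(* C[L^- GL_K] = C[T^{(n)}_{ab} : n >= 0, a, b]: the polynomial ring in the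
   (infinitely many) variables indexed by Tidx K, i.e. the monoid algebra of
   the free commutative monoid on Tidx K. *)
Definition CLGL (R : realType) (K : nat) := {malg (Cplx R)[{cmonom (Tidx K)}]}.

Definition Tv (R : realType) (K : nat) (n : nat) (a b : 'I_K) : CLGL R K :=
  << ucm ((n, a, b) : Tidx K) >>.

(* Coordinates of Rep(1,K): None = B, Some (inl i) = psi_i, Some (inr i) = psibar_i. *)
Definition Ridx (K : nat) := option ('I_K + 'I_K)%type.

Definition CRep (R : realType) (K : nat) := {malg (Cplx R)[{cmonom (Ridx K)}]}.

Definition Bv (R : realType) (K : nat) : CRep R K := << ucm (None : Ridx K) >>.
Definition psiv (R : realType) (K : nat) (i : 'I_K) : CRep R K :=
  << ucm (Some (inl i) : Ridx K) >>.
Definition psibv (R : realType) (K : nat) (i : 'I_K) : CRep R K :=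
  << ucm (Some (inr i) : Ridx K) >>.

Definition Btilde (R : realType) (K : nat) : CRep R K :=
  Bv R K + \sum_(i < K) psiv R i * psibv R i.

(* pi_1(B,psi,psibar) = 1 + psibar (z - Btilde/2)^{-1} psi
                      = 1 + sum_{n>=0} psibar psi (Btilde/2)^n z^{-n-1},
   so the coordinate T^{(n)}_{ab} (entry (a,b) of g_{n+1}) pulls back to
   psibar_a psi_b (Btilde/2)^n. *)
Definition pi1_img (R : realType) (K : nat) (t : Tidx K) : CRep R K :=
  let: (n, a, b) := t in
  psibv R a * psiv R b * ((2%:R)^-1%:MP * Btilde R K) ^+ n.

(* The pullback pi_1^* : C[L^- GL_K] -> C[Rep(1,K)] (C-algebra morphism
   determined by the images of the variables). Its image lies in the
   GL_1-invariants C[Rep(1,K)]^{GL_1} = C[M(1,K)]. *)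
Definition pi1_pullback (R : realType) (K : nat) (f : CLGL R K) : CRep R K :=
  mmap (fun c : Cplx R => c%:MP)
       (fun m : {cmonom (Tidx K)} =>
          \prod_(t <- finsupp m) pi1_img R t ^+ (m t)) f.

(* I_1 : the ideal of the scheme-theoretic image of pi_1, i.e. the kernel
   of pi_1^* : C[L^- GL_K] -> C[M(1,K)] (subset of C[Rep(1,K)]). *)
Definition I1 (R : realType) (K : nat) (f : CLGL R K) : Prop :=
  pi1_pullback f = 0.

Definition ideal_gen (A : comNzRingType) (P : A -> Prop) (f : A) : Prop :=
  exists s : seq (A * A), (forall p, p \in s -> P p.2) /\
                          f = \sum_(p <- s) p.1 * p.2.

Definition radical_ideal (A : comNzRingType) (I : A -> Prop) : Prop :=
  forall (f : A) (n : nat), I (f ^+ n) -> I f.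

Definition I1'_gens (R : realType) (K : nat) (g : CLGL R K) : Prop :=
  (exists (m n k : nat) (a b c d : 'I_K),
      g = Tv R m a b * Tv R (n + k) c d - Tv R n a b * Tv R (m + k) c d)
  \/
  (exists (m n : nat) (a1 a2 b1 b2 : 'I_K),
      g = Tv R m a1 b1 * Tv R n a2 b2 - Tv R m a1 b2 * Tv R n a2 b1).

Definition I1' (R : realType) (K : nat) : CLGL R K -> Prop :=
  ideal_gen (@I1'_gens R K).

(* Main.v *)
Require Import Defs.
From HB Require Import structures.
From mathcomp Require Import all_boot all_order all_algebra.
From mathcomp Require Import finmap monalg complex reals.
From mathcomp Require Import ring zify.
Import GRing.Theory Num.Theory.
Local Open Scope ring_scope.
Local Open Scope fset_scope.

Set Implicit Arguments.
Unset Strict Implicit.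
Unset Printing Implicit Defensive.
Section Ev.
Context (I : choiceType) (S : comNzRingType) (v : I -> S).

Definition ev (m : cmonom I) : S := \prod_(t <- finsupp m) v t ^+ m t.

Lemma evEw (d : {fset I}) (m : cmonom I) : finsupp m `<=` d -> ev m = \prod_(t <- d) v t ^+ m t.
Proof.
move=> le; rewrite /ev (big_fset_incl _ le) // => x _ xn.
have/eqP -> : m x == 0%N by rewrite cmE_eq0.
by rewrite expr0.
Qed.

Lemma ev1 : ev (mone : cmonom I) = 1.
Proof. by rewrite /ev mdom1 big_seq_fset0. Qed.

Lemma evM (m1 m2 : cmonom I) : ev (mmul m1 m2) = ev m1 * ev m2.
Proof.
rewrite (@evEw (finsupp m1 `|` finsupp m2)); last by rewrite mdomD.
rewrite (@evEw (finsupp m1 `|` finsupp m2) m1) ?fsubsetUl //.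
rewrite (@evEw (finsupp m1 `|` finsupp m2) m2) ?fsubsetUr //.
rewrite -big_split /=; apply: eq_bigr => t _.
by rewrite cmM exprD.
Qed.

Lemma evU i : ev (ucm i) = v i.
Proof. by rewrite /ev mdomU big_seq_fset1 cmUU expr1. Qed.

HB.instance Definition _ := isMultiplicative.Build (cmonom I) S ev (evM, ev1).

End Ev.

Section Ideal.
Context (A : comNzRingType) (P : A -> Prop).
Local Notation J := (ideal_gen P).

Lemma ig0 : J 0.
Proof. by exists [::]; split => //; rewrite big_nil. Qed.

Lemma igD x y : J x -> J y -> J (x + y).
Proof.
move=> [s1 [H1 ->]] [s2 [H2 ->]]; exists (s1 ++ s2); split; last by rewrite big_cat.
by move=> p; rewrite mem_cat => /orP [/H1|/H2].
Qed.

Lemma igM r x : J x -> J (r * x).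
Proof.
move=> [s [H ->]]; exists [seq (r * p.1, p.2) | p <- s]; split.
  move=> p /mapP [q qs] E; rewrite E /=; exact: H.
by rewrite big_map mulr_sumr; apply: eq_bigr => p _; rewrite mulrA.
Qed.

Lemma igN x : J x -> J (- x).
Proof. by move=> H; rewrite -mulN1r; apply: igM. Qed.

Lemma igB x y : J x -> J y -> J (x - y).
Proof. by move=> Hx Hy; apply: igD => //; apply: igN. Qed.

Lemma igP g : P g -> J g.
Proof. by move=> Hg; exists [:: (1, g)]; split; [move=> p; rewrite inE => /eqP -> | rewrite big_seq1 mul1r]. Qed.

Definition eqv x y := J (x - y).

Lemma eqv_refl x : eqv x x.
Proof. by rewrite /eqv subrr; apply: ig0. Qed.

Lemma eqv_sym x y : eqv x y -> eqv y x.
Proof. by rewrite /eqv => /igN; rewrite opprB. Qed.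

Lemma eqv_trans x y z : eqv x y -> eqv y z -> eqv x z.
Proof. by rewrite /eqv => H1 H2; have := igD H1 H2; rewrite addrA subrK. Qed.

Lemma eqvMl r x y : eqv x y -> eqv (r * x) (r * y).
Proof. by rewrite /eqv -mulrBr; apply: igM. Qed.

Lemma eqvMr r x y : eqv x y -> eqv (x * r) (y * r).
Proof. by rewrite ![_ * r]mulrC; apply: eqvMl. Qed.

Lemma eqvM x y x' y' : eqv x y -> eqv x' y' -> eqv (x * x') (y * y').
Proof. by move=> H1 H2; apply: (eqv_trans (eqvMr _ H1)); apply: eqvMl. Qed.

End Ideal.
Section Lists.
Context (I : choiceType).

Definition Lm (m : cmonom I) : seq I := flatten [seq nseq (m t) t | t <- finsupp m].

Lemma cm_big (T : Type) (s : seq T) (F : T -> cmonom I) i :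
  (\big[mmul/mone]_(t <- s) F t) i = (\sum_(t <- s) F t i)%N.
Proof.
elim: s => [|t s IH]; first by rewrite !big_nil cm1.
by rewrite !big_cons cmM IH.
Qed.

Lemma Lm_decomp (m : cmonom I) : m = \big[mmul/mone]_(t <- Lm m) ucm t.
Proof.
apply/eqP/cmP => i; rewrite cm_big /Lm big_flatten /= big_map.
have E t : (\sum_(t0 <- nseq (m t) t) ucm t0 i)%N = (m t * (t == i))%N.
  elim: (m t) => [|n IH]; first by rewrite big_nil.
  by rewrite /= big_cons IH cmU mulSn.
under eq_bigr do rewrite E.
rewrite (eq_bigr (fun t => if t == i then m t else 0%N)); last first.
  by move=> t _; case: (t == i); rewrite ?muln1 ?muln0.
case: (boolP (i \in finsupp m)) => Hi.
  rewrite (bigD1_seq i) ?fset_uniq //= eqxx big1 ?addn0 // => t /negbTE -> //.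
rewrite -big_mkcond /=.
rewrite big_seq_cond big1; last first.
  by move=> t /andP [tm /eqP ti]; move: Hi; rewrite -ti tm.
by apply/eqP; rewrite cmE_eq0.
Qed.

Lemma ev_Lm (S : comNzRingType) (v : I -> S) (m : cmonom I) :
  ev v m = \prod_(t <- Lm m) v t.
Proof.
rewrite /ev /Lm big_flatten /= big_map; apply: eq_bigr => t _.
elim: (m t) => [|n IH]; first by rewrite big_nil expr0.
by rewrite exprS IH /= big_cons.
Qed.

Lemma malgUM (G : comNzRingType) (k1 k2 : cmonom I) :
  (<< mmul k1 k2 >> : {malg G[cmonom I]}) = << k1 >> * << k2 >>.
Proof. by rewrite malgM_def fgmulUU mulr1. Qed.

Lemma malgU1 (G : comNzRingType) :
  (<< (mone : cmonom I) >> : {malg G[cmonom I]}) = 1.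
Proof. exact: mpolyC1E. Qed.

Lemma malgU_big (G : comNzRingType) (T : Type) (s : seq T) (F : T -> cmonom I) :
  (<< \big[mmul/mone]_(t <- s) F t >> : {malg G[cmonom I]}) = \prod_(t <- s) << F t >>.
Proof.
elim: s => [|t s IH]; first by rewrite !big_nil malgU1.
by rewrite !big_cons malgUM IH.
Qed.

Lemma malgU_Lm (G : comNzRingType) (m : cmonom I) :
  (<< m >> : {malg G[cmonom I]}) = \prod_(t <- Lm m) << ucm t >>.
Proof. by rewrite {1}(Lm_decomp m) malgU_big. Qed.

End Lists.
Section Main.
Context (R : realType) (K : nat).
Local Notation A := (CLGL R K).
Local Notation P := (CRep R K).
Local Notation C := (Cplx R).
Local Notation RI := (Ridx K).
Local Notation TI := (Tidx K).

Definition Bpow n : cmonom RI := iter n (mmul (ucm None)) mone.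
Definition Uc_def (t : TI) : cmonom RI :=
  mmul (ucm (Some (inr t.1.2))) (mmul (ucm (Some (inl t.2))) (Bpow t.1.1)).
Fact Uc_key : unit. Proof. by []. Qed.
Definition Uc := locked_with Uc_key Uc_def.
Lemma UcE t : Uc t = Uc_def t.
Proof. by rewrite /Uc; case: Uc_key. Qed.
Definition Mk (s : seq TI) : cmonom RI := \big[mmul/mone]_(t <- s) Uc t.
Definition uimg (t : TI) : P := psibv R t.1.2 * psiv R t.2 * Bv R K ^+ t.1.1.

Lemma eqSS_rr (a a' : 'I_K) : (Some (inr a) == Some (inr a') :> RI) = (a == a').
Proof. by apply/eqP/eqP => [[]|->]. Qed.
Lemma eqSS_ll (a a' : 'I_K) : (Some (inl a) == Some (inl a') :> RI) = (a == a').
Proof. by apply/eqP/eqP => [[]|->]. Qed.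
Lemma eqSS_lr (a a' : 'I_K) : (Some (inl a) == Some (inr a') :> RI) = false.
Proof. by apply/eqP. Qed.
Lemma eqSS_rl (a a' : 'I_K) : (Some (inr a) == Some (inl a') :> RI) = false.
Proof. by apply/eqP. Qed.
Lemma eqSN x : (Some x == None :> RI) = false.
Proof. by apply/eqP. Qed.
Lemma eqNS x : (None == Some x :> RI) = false.
Proof. by apply/eqP. Qed.

Lemma Bpow_c n i : Bpow n i = if i is None then n else 0%N.
Proof.
elim: n => [|n IH]; first by rewrite /= cm1; case: (i).
by rewrite /= cmM IH cmU; case: (i) => [x|] /=.
Qed.

Lemma Uc_None t : Uc t None = t.1.1.
Proof. by rewrite UcE /Uc_def !cmM !cmU !eqSN Bpow_c. Qed.
Lemma Uc_inr t a : Uc t (Some (inr a)) = (t.1.2 == a) :> nat.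
Proof. by rewrite UcE /Uc_def !cmM !cmU eqSS_rr eqSS_lr Bpow_c addn0 addn0. Qed.
Lemma Uc_inl t b : Uc t (Some (inl b)) = (t.2 == b) :> nat.
Proof. by rewrite UcE /Uc_def !cmM !cmU eqSS_ll eqSS_rl Bpow_c addn0. Qed.

Lemma Mk_nil i : Mk [::] i = 0%N.
Proof. by rewrite /Mk big_nil cm1. Qed.
Lemma Mk_cons t s i : Mk (t :: s) i = (Uc t i + Mk s i)%N.
Proof. by rewrite /Mk big_cons cmM. Qed.

Definition Nsum (s : seq TI) := sumn [seq t.1.1 | t <- s].
Definition zero (s : seq TI) : seq TI := [seq (0%N, t.1.2, t.2) | t <- s].

Lemma Mk_None s : Mk s None = Nsum s.
Proof. by elim: s => [|t s IH]; rewrite ?Mk_nil // Mk_cons IH Uc_None. Qed.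
Lemma Mk_inr s a : Mk s (Some (inr a)) = count (fun t : TI => t.1.2 == a) s.
Proof. by elim: s => [|t s IH]; rewrite ?Mk_nil // Mk_cons IH Uc_inr. Qed.
Lemma Mk_inl s b : Mk s (Some (inl b)) = count (fun t : TI => t.2 == b) s.
Proof. by elim: s => [|t s IH]; rewrite ?Mk_nil // Mk_cons IH Uc_inl. Qed.
Lemma Nsum_zero s : Nsum (zero s) = 0%N.
Proof. by elim: s. Qed.

Lemma Bpow_malg n : (Bv R K ^+ n : P) = << Bpow n >>.
Proof.
elim: n => [|n IH]; first by rewrite expr0 /= malgU1.
by rewrite exprS IH /= malgUM.
Qed.

Lemma uimgE t : uimg t = << Uc t >>.
Proof. by rewrite /uimg UcE /Uc_def Bpow_malg !malgUM mulrA. Qed.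

Lemma ev_uimg m : ev uimg m = << Mk (Lm m) >>.
Proof.
rewrite ev_Lm /Mk malgU_big; apply: eq_bigr => t _; exact: uimgE.
Qed.

End Main.
Local Open Scope ring_scope.
Lemma morph4 (A1 B1 : comNzRingType) (h : A1 -> B1) :
  (forall x y, h (x * y) = h x * h y) -> (forall x y, h (x - y) = h x - h y) ->
  forall x y z w, h (x * y - z * w) = h x * h y - h z * h w.
Proof. by move=> hM hB x y z w; rewrite hB !hM. Qed.

Lemma morph3 (A1 B1 : comNzRingType) (h : A1 -> B1) :
  (forall x y, h (x * y) = h x * h y) -> (forall x n, h (x ^+ n) = h x ^+ n) ->
  forall x y z n, h (x * y * z ^+ n) = h x * h y * h z ^+ n.
Proof. by move=> hM hX x y z n; rewrite !hM hX. Qed.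

Lemma eq3 (B : ringType) (x x' y y' z z' : B) n :
  x = x' -> y = y' -> z = z' -> x * y * z ^+ n = x' * y' * z' ^+ n.
Proof. by move=> -> -> ->. Qed.
Lemma eq2 (B : ringType) (x x' y y' : B) :
  x = x' -> y = y' -> x * y = x' * y'.
Proof. by move=> -> ->. Qed.

Section Maps.
Context (R : realType) (K : nat).
Local Notation A := (CLGL R K).
Local Notation P := (CRep R K).
Local Notation C := (Cplx R).
Local Notation RI := (Ridx K).
Local Notation TI := (Tidx K).

Definition wimg (i : RI) : P :=
  match i with
  | None => 2%:R * Bv R K - \sum_(j < K) psiv R j * psibv R j
  | Some x => << ucm (Some x) >>
  end.

Local Notation sgm := (mmap (@malgC (cmonom RI) C) (ev wimg)).
Local Notation phi := (mmap (@malgC (cmonom RI) C) (ev (@pi1_img R K))).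
Local Notation mu := (mmap (@malgC (cmonom RI) C) (ev (@uimg R K))).

Lemma sgmM (x y : P) : sgm (x * y) = sgm x * sgm y.
Proof. exact: rmorphM. Qed.
Lemma sgmD (x y : P) : sgm (x + y) = sgm x + sgm y.
Proof. exact: rmorphD. Qed.
Lemma sgm0 : sgm 0 = 0.
Proof. exact: rmorph0. Qed.
Lemma sgmXn (x : P) n : sgm (x ^+ n) = sgm x ^+ n.
Proof. exact: rmorphXn. Qed.
Lemma sgm_sum (T : Type) (s : seq T) (F : T -> P) :
  sgm (\sum_(t <- s) F t) = \sum_(t <- s) sgm (F t).
Proof. exact: rmorph_sum. Qed.
Lemma sgm_prod (T : Type) (s : seq T) (F : T -> P) :
  sgm (\prod_(t <- s) F t) = \prod_(t <- s) sgm (F t).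
Proof. exact: rmorph_prod. Qed.
Lemma sgmC (c : C) : sgm (c%:MP) = c%:MP.
Proof. exact: mmapC. Qed.
Lemma sgmCM (c : C) (x : P) : sgm (c%:MP * x) = c%:MP * sgm x.
Proof. by rewrite sgmM sgmC. Qed.
Lemma sgmU (x : RI) : sgm << ucm x >> = wimg x.
Proof. by rewrite mmapU evU /= mpolyC1E mul1r. Qed.
Lemma sgmM3 (x y z : P) n : sgm (x * y * z ^+ n) = sgm x * sgm y * sgm z ^+ n.
Proof. exact: (morph3 sgmM sgmXn). Qed.

Lemma phiM (x y : A) : phi (x * y) = phi x * phi y.
Proof. exact: rmorphM. Qed.
Lemma phiB (x y : A) : phi (x - y) = phi x - phi y.
Proof. exact: rmorphB. Qed.
Lemma phi_sum (T : Type) (s : seq T) (F : T -> A) :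
  phi (\sum_(t <- s) F t) = \sum_(t <- s) phi (F t).
Proof. exact: rmorph_sum. Qed.
Lemma phiU (x : TI) : phi << ucm x >> = pi1_img R x.
Proof. by rewrite mmapU evU /= mpolyC1E mul1r. Qed.
Lemma phi4 (x y z w : A) :
  phi (x * y - z * w) = phi x * phi y - phi z * phi w.
Proof. exact: (morph4 phiM phiB). Qed.
Lemma phiE (f : A) : pi1_pullback f = phi f.
Proof. by []. Qed.

Lemma malgUE (I : choiceType) (G : comNzRingType) (c : G) (k : cmonom I) :
  << c *g k >> = c%:MP * << k >>.
Proof. by rewrite malgM_def fgmulUU mulr1 mul1m. Qed.

Lemma sgm_psiv j : sgm (psiv R j) = psiv R j.
Proof. by rewrite /psiv sgmU. Qed.
Lemma sgm_psibv j : sgm (psibv R j) = psibv R j.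
Proof. by rewrite /psibv sgmU. Qed.

Lemma two_neq0 : (2%:R : C) != 0.
Proof. by rewrite pnatr_eq0. Qed.

Lemma sgm_pp j : sgm (psiv R j * psibv R j) = psiv R j * psibv R j.
Proof. rewrite sgmM; apply: eq2; [exact: sgm_psiv | exact: sgm_psibv]. Qed.

Lemma half2 (x : P) : (2%:R)^-1%:MP * (2%:R * x) = x.
Proof.
by rewrite mulrA -mpolyC_nat -mpolyCM mulVf ?two_neq0 // mpolyC1E mul1r.
Qed.

Lemma sgm_beta : sgm ((2%:R)^-1%:MP * Btilde R K) = Bv R K.
Proof.
rewrite sgmCM /Btilde sgmD [X in _ + X]sgm_sum.
rewrite (eq_bigr (fun j => psiv R j * psibv R j)); last by move=> j _; rewrite sgm_pp.
by rewrite /Bv sgmU /= subrK half2.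
Qed.

Lemma sgm_img t : sgm (pi1_img R t) = uimg R t.
Proof.
case: t => [[n a] b] /=.
apply: (etrans (sgmM3 _ _ _ _)).
rewrite /uimg.
apply: eq3.
- exact: sgm_psibv.
- exact: sgm_psiv.
- exact: sgm_beta.
Qed.

Lemma sgm_phi (f : A) : sgm (pi1_pullback f) = mu f.
Proof.
have E1 : pi1_pullback f = \sum_(m <- msupp f) (f@_m)%:MP * ev (@pi1_img R K) m by exact: erefl.
have E2 : mu f = \sum_(m <- msupp f) (f@_m)%:MP * ev (@uimg R K) m by exact: erefl.
rewrite E1 sgm_sum; apply: esym; apply: (etrans E2); apply: esym.
apply: eq_bigr => m _.
rewrite sgmCM; apply: eq2 => //.
rewrite /ev sgm_prod; apply: eq_bigr => t _.
by rewrite sgmXn sgm_img.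
Qed.

Lemma phiT (n : nat) (a b : 'I_K) : pi1_pullback (Tv R n a b) = pi1_img R (n, a, b).
Proof. by rewrite phiE /Tv phiU. Qed.

End Maps.
Unset Implicit Arguments.
Section Comb.
Context (K : nat) (A : comNzRingType) (Tf : nat -> 'I_K -> 'I_K -> A).
Local Notation TI := (Tidx K).

Definition Gp (g : A) : Prop :=
  (exists (m n k : nat) (a b c d : 'I_K),
      g = Tf m a b * Tf (n + k)%N c d - Tf n a b * Tf (m + k)%N c d)
  \/
  (exists (m n : nat) (a1 a2 b1 b2 : 'I_K),
      g = Tf m a1 b1 * Tf n a2 b2 - Tf m a1 b2 * Tf n a2 b1).

Local Notation E := (eqv Gp).

Definition prodT (s : seq TI) : A := \prod_(t <- s) Tf t.1.1 t.1.2 t.2.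
Definition Rl (x y : seq TI) := E (prodT x) (prodT y) /\ Mk x = Mk y.

Lemma Rl_refl x : Rl x x.
Proof. by split; [exact: eqv_refl|]. Qed.
Lemma Rl_sym x y : Rl x y -> Rl y x.
Proof. by case=> H1 H2; split; [exact: eqv_sym|]. Qed.
Lemma Rl_trans x y z : Rl x y -> Rl y z -> Rl x z.
Proof. by case=> H1 H2 [H3 H4]; split; [exact: eqv_trans H1 H3| rewrite H2]. Qed.
Lemma Rl_perm x y : perm_eq x y -> Rl x y.
Proof.
move=> H; split; first by rewrite /prodT (perm_big _ H); exact: eqv_refl.
by rewrite /Mk (perm_big _ H).
Qed.
Lemma Rl_cat x y x' y' : Rl x y -> Rl x' y' -> Rl (x ++ x') (y ++ y').
Proof.
case=> H1 H2 [H3 H4]; split; first by rewrite /prodT !big_cat; exact: eqvM.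
by rewrite /Mk !big_cat -/(Mk x) -/(Mk y) -/(Mk x') -/(Mk y') H2 H4.
Qed.
Lemma Rl_cons t x y : Rl x y -> Rl (t :: x) (t :: y).
Proof. by move=> H; exact: (Rl_cat _ _ _ _ (Rl_refl [:: t]) H). Qed.
Lemma Rl_cons2 s t1 t2 t1' t2' : Rl [:: t1; t2] [:: t1'; t2'] -> Rl (t1 :: t2 :: s) (t1' :: t2' :: s).
Proof. by move=> H; exact: (Rl_cat _ _ _ _ H (Rl_refl s)). Qed.
Lemma Rl_swap t1 t2 s : Rl (t1 :: t2 :: s) (t2 :: t1 :: s).
Proof. by apply: Rl_perm; apply/permP => p /=; rewrite addnCA. Qed.

Lemma prodT2 t1 t2 : prodT [:: t1; t2] = Tf t1.1.1 t1.1.2 t1.2 * Tf t2.1.1 t2.1.2 t2.2.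
Proof. by rewrite /prodT big_cons big_seq1. Qed.

Lemma RlS2 p q a b c d : Rl [:: (p, a, b); (q, c, d)] [:: (p, a, d); (q, c, b)].
Proof.
split.
  rewrite /eqv !prodT2 /=; apply: igP; right; by exists p, q, a, c, b, d.
apply/eqP/cmP => i; rewrite !Mk_cons Mk_nil.
case: i => [[b'|a']|]; rewrite ?Uc_None ?Uc_inr ?Uc_inl /= ?addn0 //; exact: addnC.
Qed.

Lemma RlE2 p q p' q' a b c d : (p + q = p' + q')%N ->
  Rl [:: (p, a, b); (q, c, d)] [:: (p', a, b); (q', c, d)].
Proof.
move=> Hs; split; last first.
  apply/eqP/cmP => i; rewrite !Mk_cons Mk_nil.
  by case: i => [[b'|a']|]; rewrite ?Uc_None ?Uc_inr ?Uc_inl /= ?addn0.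
rewrite /eqv !prodT2 /=; case: (leqP p' q) => h.
  apply: igP; left; exists p, p', (q - p')%N, a, b, c, d.
  rewrite subnKC //; have -> : (p + (q - p') = q')%N by lia.
  by [].
have -> : Tf p a b * Tf q c d - Tf p' a b * Tf q' c d =
          Tf q c d * Tf (q' + (p - q'))%N a b - Tf q' c d * Tf (q + (p - q'))%N a b.
  rewrite subnKC; last by lia.
  have -> : (q + (p - q') = p')%N by lia.
  by rewrite mulrC [Tf q' c d * _]mulrC.
apply: igP; left; by exists q, q', (p - q')%N, c, d, a, b.
Qed.

Lemma Nsum_cons (t : TI) (s : seq TI) : Nsum (t :: s) = (t.1.1 + Nsum s)%N.
Proof. by []. Qed.

Lemma Rl_zero s n a b : Rl ((n, a, b) :: s) (((n + Nsum s)%N, a, b) :: zero s).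
Proof.
elim: s n => [|[[p c] d] s IH] n.
  have -> : (n + Nsum ([::] : seq TI) = n)%N by rewrite addn0.
  exact: Rl_refl.
have H1 := Rl_cons2 s _ _ _ _ (RlE2 n p (n + p)%N 0 a b c d (esym (addn0 _))).
have H2 := Rl_swap ((n + p)%N, a, b) (0%N, c, d) s.
have H3 := Rl_cons (0%N, c, d) _ _ (IH (n + p)%N).
have H4 := Rl_swap (0%N, c, d) (n + p + Nsum s, a, b)%N (zero s).
have -> : (n + Nsum ((p, c, d) :: s) = n + p + Nsum s)%N by rewrite Nsum_cons /= addnA.
exact: (Rl_trans _ _ _ H1 (Rl_trans _ _ _ H2 (Rl_trans _ _ _ H3 H4))).
Qed.

Lemma step2 s' a b (t1 : TI) s1 : Rl s' (t1 :: s1) -> t1.1.2 = a ->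
  (0 < Mk s' (Some (inl b)))%N -> exists n2 s2, Rl s' ((n2, a, b) :: s2).
Proof.
case: t1 => [[n1 a1] b1] /= R1 E; subst a1.
case: (eqVneq b1 b) => [eb|nb] Hb; first by subst b1; exists n1, s1.
have Hb' : (0 < count (fun t : TI => t.2 == b) s1)%N.
  by move: Hb; rewrite R1.2 Mk_inl /= (negbTE nb) add0n.
move: Hb'; rewrite -has_count => /hasP [t3 t3s1 /eqP t3b].
have P3 := Rl_cons (n1, a, b1) _ _ (Rl_perm _ _ (perm_to_rem t3s1)).
move: t3 t3b t3s1 P3 => [[n3 a3] b3] /= -> _ P3.
exists n1, ((n3, a3, b1) :: rem (n3, a3, b) s1).
exact: (Rl_trans _ _ _ R1 (Rl_trans _ _ _ P3 (Rl_cons2 _ _ _ _ _ (RlS2 n1 n3 a b1 a3 b)))).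
Qed.

Lemma Rl_main s s' : Mk s = Mk s' -> Rl s s'.
Proof.
elim: s s' => [|[[n a] b] r IH] s' H.
  case: s' H => [|t s'] H; first exact: Rl_refl.
  exfalso; move: (f_equal (fun m : cmonom _ => m (Some (inr t.1.2))) H).
  by rewrite /= !Mk_inr /= eqxx.
have Ha : (0 < count (fun t : TI => t.1.2 == a) s')%N.
  by rewrite -Mk_inr -H Mk_inr /= eqxx.
move: Ha; rewrite -has_count => /hasP [t1 t1s' /eqP t1a].
have R1 := Rl_perm _ _ (perm_to_rem t1s').
have Hb : (0 < Mk s' (Some (inl b)))%N by rewrite -H Mk_inl /= eqxx.
have [n2 [s2 R2]] := step2 _ _ _ _ _ R1 t1a Hb.
have R3 := Rl_trans _ _ _ R2 (Rl_zero s2 n2 a b).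
have HN := etrans H R3.2.
have HNone : (n + Nsum r = n2 + Nsum s2)%N.
  move: (f_equal (fun m : cmonom _ => m None) HN).
  by rewrite /= !Mk_None !Nsum_cons Nsum_zero addn0.
clear R2; case: s2 R3 HN HNone => [|t2 s2'] R3 HN HNone.
  case: r IH H HN HNone => [|t r'] IH H HN HNone.
    have -> : n = (n2 + Nsum ([::] : seq TI))%N by move: HNone; rewrite /= !addn0.
    exact: (Rl_sym _ _ R3).
  exfalso; move: (f_equal (fun m : cmonom _ => m (Some (inr t.1.2))) HN).
  rewrite /= !Mk_inr /= eqxx; lia.
set N' := (n2 + Nsum (t2 :: s2'))%N.
have le : (n <= N')%N by rewrite /N' -HNone leq_addr.
have R4 := Rl_cons2 (zero s2') _ _ _ _ (RlE2 N' 0 n (N' - n)%N a b t2.1.2 t2.2 (etrans (addn0 _) (esym (subnKC le)))).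
have R5 := Rl_trans _ _ _ R3 R4.
have HM : Mk r = Mk (((N' - n)%N, t2.1.2, t2.2) :: zero s2').
  apply/eqP/cmP => i; move: (f_equal (fun m : cmonom _ => m i) (etrans H R5.2)).
  by rewrite !Mk_cons => /addnI.
exact: (Rl_trans _ _ _ (Rl_cons (n, a, b) _ _ (IH _ HM)) (Rl_sym _ _ R5)).
Qed.

Lemma comb_main s s' : Mk s = Mk s' -> ideal_gen Gp (prodT s - prodT s').
Proof. by move=> H; case: (Rl_main _ _ H). Qed.

End Comb.

Section Assemble.
Context (A : comNzRingType) (Q : A -> Prop) (M : Type) (KT : eqType)
  (key : M -> KT) (e : M -> A).

Lemma ig_sum (T : Type) (s : seq T) (P : pred T) (F : T -> A) :
  (forall i, P i -> ideal_gen Q (F i)) -> ideal_gen Q (\sum_(i <- s | P i) F i).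
Proof.
move=> H; apply: big_rec; first exact: ig0.
by move=> i x Pi Jx; apply: igD => //; apply: H.
Qed.

Lemma assemble (S : seq M) (cf : M -> A) :
  (forall m m', key m = key m' -> ideal_gen Q (e m - e m')) ->
  (forall k, \sum_(m <- S | key m == k) cf m = 0) ->
  ideal_gen Q (\sum_(m <- S) cf m * e m).
Proof.
move=> Hconn; move: {2}(size S) (leqnn (size S)) => n.
elim: n S => [|n IH] [|m0 S'] //= Hs Hc; try by rewrite big_nil; exact: ig0.
set k0 := key m0.
have E0 : \sum_(m <- m0 :: S') cf m * e m =
   \sum_(m <- m0 :: S' | key m == k0) cf m * (e m - e m0) +
   \sum_(m <- m0 :: S' | key m != k0) cf m * e m +
   (\sum_(m <- m0 :: S' | key m == k0) cf m) * e m0.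
  rewrite (bigID (fun m => key m == k0)) /=.
  rewrite -addrA [_ + (_ * _)]addrC addrA; congr (_ + _).
  rewrite mulr_suml -big_split /=; apply: eq_bigr => m _.
  by rewrite mulrBr subrK.
rewrite E0 Hc mul0r addr0; apply: igD.
  apply: ig_sum => m /eqP km; apply: igM; exact: Hconn.
rewrite -big_filter /= eqxx /=.
apply: IH.
  by rewrite size_filter (leq_trans (count_size _ _)).
move=> k; rewrite big_filter_cond.
case: (eqVneq k k0) => [->|nk].
  by rewrite big1 // => m /andP [/negbTE ->].
rewrite (eq_bigl (fun m => key m == k)); last first.
  by move=> m /=; case: (eqVneq (key m) k) => [->|]; rewrite ?andbF ?andbT.
move: (Hc k); rewrite big_cons; rewrite /k0 eq_sym in nk.
by rewrite (negbTE nk).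
Qed.

End Assemble.
Set Implicit Arguments.
Lemma gen_zero (B : ringType) (x y z w X Y Z W : B) :
  x = X -> y = Y -> z = Z -> w = W -> X * Y - Z * W = 0 -> x * y - z * w = 0.
Proof. by move=> -> -> -> ->. Qed.

Lemma ring_gen1 (B : comNzRingType) (x1 y1 x2 y2 z : B) (m n k : nat) :
  (x1 * y1 * z ^+ m) * (x2 * y2 * z ^+ (n + k)%N) -
  (x1 * y1 * z ^+ n) * (x2 * y2 * z ^+ (m + k)%N) = 0.
Proof. rewrite !exprD; ring. Qed.

Lemma ring_gen2 (B : comNzRingType) (x1 x2 y1 y2 z : B) (m n : nat) :
  (x1 * y1 * z ^+ m) * (x2 * y2 * z ^+ n) -
  (x1 * y2 * z ^+ m) * (x2 * y1 * z ^+ n) = 0.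
Proof. ring. Qed.

Lemma eq_sub_ig (B : comNzRingType) (Q : B -> Prop) (x x' y y' : B) :
  x = x' -> y = y' -> ideal_gen Q (x' - y') -> ideal_gen Q (x - y).
Proof. by move=> -> ->. Qed.

Lemma coef_sum (I : choiceType) (G : comNzRingType) (T : Type) (s : seq T)
  (F : T -> G) (Kf : T -> cmonom I) (k : cmonom I) :
  (\sum_(t <- s) (F t)%:MP * << Kf t >>)@_k = \sum_(t <- s | Kf t == k) F t.
Proof.
rewrite raddf_sum [RHS]big_mkcond /=; apply: eq_bigr => t _.
by rewrite -malgUE mcoeffU mulrb.
Qed.

Lemma mpolyC_sum (I : choiceType) (G : comNzRingType) (T : Type) (s : seq T)
  (P : pred T) (F : T -> G) :
  \sum_(t <- s | P t) ((F t)%:MP : {malg G[cmonom I]}) = (\sum_(t <- s | P t) F t)%:MP.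
Proof. by rewrite rmorph_sum. Qed.

Section Final.
Context (R : realType) (K : nat).
Local Notation A := (CLGL R K).
Local Notation P := (CRep R K).
Local Notation C := (Cplx R).
Local Notation RI := (Ridx K).
Local Notation TI := (Tidx K).
Local Notation sgm := (mmap (@malgC (cmonom RI) C) (ev (@wimg R K))).
Local Notation phi := (mmap (@malgC (cmonom RI) C) (ev (@pi1_img R K))).
Local Notation mu := (mmap (@malgC (cmonom RI) C) (ev (@uimg R K))).

Lemma coef_zero (f : A) : pi1_pullback f = 0 ->
  forall k, \sum_(m <- msupp f | Mk (Lm m) == k) f@_m = 0.
Proof.
move=> Hf k.
have H0 : mu f = 0 by rewrite -sgm_phi Hf; exact: sgm0.
have H1 : mu f = \sum_(m <- msupp f) (f@_m)%:MP * << Mk (Lm m) >>.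
  apply: (etrans (_ : mu f = \sum_(m <- msupp f) (f@_m)%:MP * ev (@uimg R K) m)).
    exact: erefl.
  by apply: eq_bigr => m _; rewrite ev_uimg.
apply: (etrans (esym (coef_sum (msupp f) (fun m => f@_m) (fun m => Mk (Lm m)) k))).
apply: (etrans (congr1 (mcoeff k) (esym H1))).
rewrite H0; exact: mcoeff0.
Qed.

Lemma conn_malg (m m' : cmonom TI) : Mk (Lm m) = Mk (Lm m') -> @I1' R K (<< m >> - << m' >>).
Proof.
move=> H.
have E (m1 : cmonom TI) : (<< m1 >> : A) = prodT K A (@Tv R K) (Lm m1).
  rewrite malgU_Lm /prodT; apply: eq_bigr => [[[n a] b]] _; exact: erefl.
apply: (eq_sub_ig (E m) (E m')).
exact: (comb_main K A (@Tv R K) (Lm m) (Lm m') H).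
Qed.

Lemma phi_gens (g : A) : @I1'_gens R K g -> pi1_pullback g = 0.
Proof.
case=> [[m [n [k [a [b [c [d ->]]]]]]]|[m [n [a1 [a2 [b1 [b2 ->]]]]]]];
  rewrite phiE phi4.
  apply: (gen_zero (@phiT R K _ _ _) (@phiT R K _ _ _) (@phiT R K _ _ _) (@phiT R K _ _ _)).
  exact: (ring_gen1 (psibv R a) (psiv R b) (psibv R c) (psiv R d) ((2%:R)^-1%:MP * Btilde R K) m n k).
apply: (gen_zero (@phiT R K _ _ _) (@phiT R K _ _ _) (@phiT R K _ _ _) (@phiT R K _ _ _)).
exact: (ring_gen2 (psibv R a1) (psibv R a2) (psiv R b1) (psiv R b2) ((2%:R)^-1%:MP * Btilde R K) m n).
Qed.

End Final.

Theorem mainTheorem6 (R : realType) (K : nat) :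
  radical_ideal (@I1' R K) ->
  forall f : CLGL R K, I1 f <-> I1' f.
Proof.
move=> _ f; split.
  move=> Hf.
  have Ef : f = \sum_(m <- msupp f) (f@_m)%:MP * << m >>.
    apply: (etrans (monalgE f)); apply: eq_bigr => m _; exact: malgUE.
  rewrite Ef.
  apply: (@assemble _ _ _ _ (fun m => Mk (Lm m)) (fun m => << m >>)).
    by move=> m m' H; exact: conn_malg.
  move=> k; apply: (etrans (mpolyC_sum _ _ _ _)).
  rewrite (coef_zero Hf k); exact: malgC0E.
case=> s [Hs ->].
rewrite /I1 phiE phi_sum; apply: big1_seq => p /andP [_ ps].
rewrite phiM.
move: (phi_gens (Hs p ps)); rewrite phiE => H.
by rewrite [X in _ * X]H mulr0.
Qed.
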